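(* Fix $k=1$ and $\epsilon$ with $0\le\epsilon\le1/2$, and assume $m^{\epsilon}\le\sqrt n$. Any deterministic coverage oracle that stores a datastructure of at most $b=nm^{1-2\epsilon}$ bits does not attain an approximation ratio of $O(m^{\epsilon-\delta})$ for any constant $\delta>0$.
   Context: A set system with $n$ items and $m$ sets is a pair $(\mathcal X,\mathcal I)$ with $\mathcal X=\{1,\dots,n\}$ and $\mathcal I$ an indexed family of $m$ subsets of $\mathcal X$. For $k\ge1$ and a query $Q\subseteq\mathcal X$, $OPT(k,\mathcal X,\mathcal I,Q)=\max\{|(\bigcup_{S\in\mathcal J}S)\cap Q| : \mathcal J\subseteq\mathcal I,|\mathcal J|\le k\}$. A deterministic coverage oracle consists of a deterministic static stage mapping $(n,m,k,(\mathcal X,\mathcal I))$ to a bit string $\mathcal D$ (the datastructure), and a deterministic dynamic stage mapping $(\mathcal D,Q)$, for $Q\subseteq\mathcal X$, to (indices of) $\mathcal J\subseteq\mathcal I$ with $|\mathcal J|\le k$, without access to $(\mathcal X,\mathcal I)$; $\mathcal A(k,\mathcal X,\mathcal I,Q)=|(\bigcup_{S\in\mathcal J}S)\cap Q|$. The approximation ratio is $\max OPT/\mathcal A$ over all set systems with $n$ items and $m$ sets and all queries $Q$. No computational restrictions are assumed. *)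

(* Defs.v *)
From mathcomp Require Import all_boot.
From Stdlib Require Import Reals.

Set Implicit Arguments.
Unset Strict Implicit.
Unset Printing Implicit Defensive.

(* A set system with n items and m sets: items are 'I_n (= {1..n} shifted to
   {0..n-1}), and the indexed family of m subsets is a function 'I_m -> {set 'I_n}. *)
Definition setsys (n m : nat) := 'I_m -> {set 'I_n}.

Definition coverage (n m : nat) (I : setsys n m) (J : {set 'I_m}) (Q : {set 'I_n}) : nat :=
  #|(\bigcup_(j in J) I j) :&: Q|.

Definition OPT (n m k : nat) (I : setsys n m) (Q : {set 'I_n}) : nat :=
  \max_(J : {set 'I_m} | #|J| <= k) coverage I J Q.

(* A deterministic coverage oracle for fixed (n, m, k):
   static stage  : set system -> bit string (the datastructure D);
   dynamic stage : (D, Q) -> indices J of at most k sets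
   (the dynamic stage has no access to the set system). *)
Definition valid_dynamic (n m k : nat) (dyn : seq bool -> {set 'I_n} -> {set 'I_m}) : Prop :=
  forall (D : seq bool) (Q : {set 'I_n}), #|dyn D Q| <= k.

Definition uses_at_most_bits (n m : nat) (stat : setsys n m -> seq bool) (b : R) : Prop :=
  forall I : setsys n m, (INR (size (stat I)) <= b)%R.

(* The oracle achieves approximation ratio at most r, i.e.
   max_{I,Q} OPT/A <= r, written without division: OPT <= r * A
   (so A = 0 < OPT counts as an infinite ratio). *)
Definition achieves_ratio (n m k : nat) (stat : setsys n m -> seq bool)
  (dyn : seq bool -> {set 'I_n} -> {set 'I_m}) (r : R) : Prop :=
  forall (I : setsys n m) (Q : {set 'I_n}),
    (INR (OPT k I Q) <= r * INR (coverage I (dyn (stat I) Q) Q))%R.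

(* Main.v *)
From Stdlib Require Import Reals Lra Lia ZArith.
Require Import Defs.
From mathcomp Require Import all_boot all_order all_algebra.
Import GRing.Theory.
Set Implicit Arguments.
Unset Strict Implicit.
Unset Printing Implicit Defensive.
Open Scope ring_scope.

Definition NN (F : finFieldType) := #|{: F * F}|.
Definition Gr (F : finFieldType) (g : {poly F}) : {set 'I_(NN F)} :=
  [set i | (enum_val i).2 == g.[(enum_val i).1]].
Definition S0 (F : finFieldType) : {set 'I_(NN F)} := [set i | (enum_val i).1 == 0].

Lemma card_fst (F : finFieldType) g (A : {set 'I_(NN F)}) (X : {set F}) :
  A \subset Gr g -> (forall i, i \in A -> (enum_val i).1 \in X) -> (#|A| <= #|X|)%nat.
Proof.
move=> sA hX.
have inj : {in A &, injective (fun i : 'I_(NN F) => (enum_val i).1)}.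
  move=> i j /(subsetP sA) hi /(subsetP sA) hj e.
  move: hi hj; rewrite !inE => /eqP hi /eqP hj.
  apply: enum_val_inj.
  by move: hi hj e; case: (enum_val i) => a b; case: (enum_val j) => c d /= -> -> ->.
rewrite -(card_in_imset inj); apply: subset_leq_card; apply/subsetP => x.
by case/imsetP => i iA ->; apply: hX.
Qed.

Lemma Gr_big (F : finFieldType) (g : {poly F}) : (#|F| <= #|Gr g|)%nat.
Proof.
have inj : injective (fun x : F => (enum_rank (x, g.[x]) : 'I_(NN F))).
  by move=> x y /enum_rank_inj [].
rewrite -cardsT -(card_imset [set: F] inj); apply: subset_leq_card.
apply/subsetP => i /imsetP [x _ ->]; by rewrite inE enum_rankK /=.
Qed.

Lemma Gr_meet (F : finFieldType) (g h : {poly F}) : g != h ->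
  ltn #|Gr g :&: Gr h| (size (g - h)).
Proof.
move=> ne.
have gh0 : g - h != 0 by rewrite subr_eq0.
apply: (@leq_ltn_trans #|[set x | root (g - h) x]|).
  apply: card_fst (subsetIl _ _) _ => i; rewrite !inE => /andP [/eqP a /eqP b].
  by rewrite /root hornerD hornerN -a -b subrr.
rewrite cardE; apply: max_poly_roots => //; last exact: enum_uniq.
by apply/allP => x; rewrite mem_enum inE.
Qed.

Lemma S0_Gr_le (F : finFieldType) (g : {poly F}) : (#|S0 F :&: Gr g| <= 1)%nat.
Proof.
rewrite -(cards1 (0 : F)); apply: card_fst (subsetIr _ _) _ => i.
by rewrite !inE => /andP [/eqP -> _].
Qed.

Lemma S0_Gr_gt (F : finFieldType) (g : {poly F}) : (0 < #|S0 F :&: Gr g|)%nat.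
Proof.
apply/card_gt0P; exists (enum_rank ((0 : F), g.[0])).
by rewrite !inE enum_rankK /= !eqxx.
Qed.

Definition Pl (F : finFieldType) K0 (t : {ffun 'I_K0.+1 -> F}) : {poly F} :=
  \poly_(i < K0.+2) (if i is i'.+1 then t (inord i') else 0).
Definition Pt (F : finFieldType) K0 (t : {ffun 'I_K0.+1 -> F}) (l : F) := Pl t + l%:P.

Lemma Pt_coef (F : finFieldType) K0 (t : {ffun 'I_K0.+1 -> F}) l (o : 'I_K0.+1) :
  (Pt t l)`_(o.+1) = t o.
Proof.
by rewrite /Pt coefD coefC /= addr0 /Pl coef_poly ltnS ltn_ord inord_val.
Qed.

Lemma Pt_size (F : finFieldType) K0 (t1 t2 : {ffun 'I_K0.+1 -> F}) l1 l2 :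
  leq (size (Pt t1 l1 - Pt t2 l2)) K0.+2.
Proof.
have hs : forall t l, (size (@Pt F K0 t l) <= K0.+2)%nat.
  move=> t l; rewrite /Pt; apply: leq_trans (size_polyD _ _) _.
  rewrite geq_max size_poly /= size_polyC; by case: (l != 0).
by apply: leq_trans (size_polyD _ _) _; rewrite geq_max size_polyN !hs.
Qed.

Lemma Pt_meet (F : finFieldType) K0 (t1 t2 : {ffun 'I_K0.+1 -> F}) l1 l2 :
  t1 != t2 -> (#|Gr (Pt t1 l1) :&: Gr (Pt t2 l2)| <= K0.+1)%nat.
Proof.
move=> ne; rewrite -ltnS; apply: leq_trans (Pt_size t1 t2 l1 l2).
apply: Gr_meet; apply: contra ne => /eqP e; apply/eqP/ffunP => o.
by rewrite -(Pt_coef t1 l1) -(Pt_coef t2 l2) e.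
Qed.

Lemma Pt_disj (F : finFieldType) K0 (t : {ffun 'I_K0.+1 -> F}) l1 l2 :
  l1 != l2 -> #|Gr (Pt t l1) :&: Gr (Pt t l2)| = 0%nat.
Proof.
move=> ne.
have e : Pt t l1 - Pt t l2 = (l1 - l2)%:P.
  by rewrite /Pt opprD addrACA subrr add0r polyCB.
have hsz : size (Pt t l1 - Pt t l2) = 1%nat.
  by rewrite e size_polyC subr_eq0 ne.
have neq : Pt t l1 != Pt t l2.
  by rewrite -subr_eq0 e polyC_eq0 subr_eq0.
by have := Gr_meet neq; rewrite hsz => h; apply/eqP; rewrite -leqn0 -ltnS.
Qed.

Definition Sys (F : finFieldType) K0 m' (e : 'I_m' -> {ffun 'I_K0.+1 -> F})
  (b : {ffun 'I_m' -> F}) : setsys (NN F) m'.+1 :=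
  fun j => if unlift ord0 j is Some k then Gr (Pt (e k) (b k)) else S0 F.

Lemma cov1 n m (I : setsys n m) j Q : coverage I [set j] Q = #|I j :&: Q|.
Proof. by rewrite /coverage big_set1. Qed.

Lemma cov0 n m (I : setsys n m) Q : coverage I set0 Q = 0%nat.
Proof. by rewrite /coverage big_set0 set0I cards0. Qed.

Lemma opt_ge n m (I : setsys n m) (J : {set 'I_m}) (Q : {set 'I_n}) : leq #|J| 1 -> leq (coverage I J Q) (OPT 1 I Q).
Proof. by move=> h; rewrite /OPT; exact: (leq_bigmax_cond J h). Qed.

Lemma card_le1 (T : finType) (J : {set T}) : leq #|J| 1 -> J = set0 \/ exists j, J = [set j].
Proof.
rewrite leq_eqVlt ltnS leqn0 => /orP [h | h].
  by right; apply/cards1P.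
by left; apply/eqP; rewrite -cards_eq0.
Qed.

Lemma key (F : finFieldType) K0 m' (e : 'I_m' -> {ffun 'I_K0.+1 -> F}) (e_inj : injective e)
  (stat : setsys (NN F) m'.+1 -> seq bool) dyn :
  valid_dynamic 1 dyn ->
  (forall I Q, ltn 0 (OPT 1 I Q) -> ltn 0 (coverage I (dyn (stat I) Q) Q)) ->
  (forall I Q, leq #|F| (OPT 1 I Q) -> ltn K0.+1 (coverage I (dyn (stat I) Q) Q)) ->
  forall b k l, (dyn (stat (Sys e b)) (Gr (Pt (e k) l)) == [set lift ord0 k]) = (l == b k).
Proof.
move=> vd h1 h2 b k l.
set I := Sys e b.
have Ik : forall k', I (lift ord0 k') = Gr (Pt (e k') (b k')) by move=> k'; rewrite /I /Sys liftK.
have I0 : I ord0 = S0 F by rewrite /I /Sys unlift_none.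
case: (eqVneq l (b k)) => [-> | ne]; rewrite ?eqxx; last first.
- apply/negP => /eqP hd.
  set Q := Gr (Pt (e k) l).
  have hopt : ltn 0 (OPT 1 I Q).
    apply: leq_trans (opt_ge I Q (_ : leq #|[set ord0] | 1)); last by rewrite cards1.
    by rewrite cov1 I0 S0_Gr_gt.
  have := h1 I Q hopt; rewrite hd cov1 Ik Pt_disj //.
  by rewrite eq_sym.
- apply/eqP; set Q := Gr (Pt (e k) (b k)).
  have hopt : leq #|F| (OPT 1 I Q).
    apply: leq_trans (opt_ge I Q (_ : leq #|[set lift ord0 k]| 1)); last by rewrite cards1.
    by rewrite cov1 Ik setIid Gr_big.
  have := h2 I Q hopt; have := vd (stat I) Q.
  case/card_le1 => [-> | [j ->]]; first by rewrite cov0.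
  rewrite cov1; case: (unliftP ord0 j) => [k' -> | ->].
    rewrite Ik; case: (eqVneq k' k) => [-> // | nk].
    have : e k' != e k by apply: contra nk => /eqP /e_inj ->.
    move/(Pt_meet (b k') (b k)) => hle hlt.
    by have := leq_trans hlt hle; rewrite ltnn.
  by rewrite I0 => hlt; have := leq_trans hlt (S0_Gr_le _).
Qed.

Definition enc B (s : seq bool) : 'I_B.+1 * B.-tuple bool :=
  (inord (size s), [tuple nth false s i | i < B]).

Lemma enc_inj B s1 s2 : leq (size s1) B -> leq (size s2) B -> enc B s1 = enc B s2 -> s1 = s2.
Proof.
move=> h1 h2 e; have hs := congr1 fst e; have ht := congr1 snd e; rewrite /= in hs.
have es : size s1 = size s2.
  by have := congr1 val hs; rewrite /= !inordK ?ltnS.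
apply: (eq_from_nth (x0 := false) es) => i hi.
have hiB : ltn i B by apply: leq_trans h1.
have := congr1 (fun t => tnth t (Ordinal hiB)) ht; by rewrite !tnth_mktuple.
Qed.

Lemma combi (F : finFieldType) K0 m' (e : 'I_m' -> {ffun 'I_K0.+1 -> F}) (e_inj : injective e) B
  (stat : setsys (NN F) m'.+1 -> seq bool) dyn :
  valid_dynamic 1 dyn -> (forall I, leq (size (stat I)) B) ->
  (forall I Q, ltn 0 (OPT 1 I Q) -> ltn 0 (coverage I (dyn (stat I) Q) Q)) ->
  (forall I Q, leq #|F| (OPT 1 I Q) -> ltn K0.+1 (coverage I (dyn (stat I) Q) Q)) ->
  leq (expn #|F| m') (muln B.+1 (expn 2 B)).
Proof.
move=> vd hB h1 h2.
have hk := key e_inj vd h1 h2.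
pose dec (D : seq bool) : {ffun 'I_m' -> F} :=
  [ffun k => odflt 0 [pick l | dyn D (Gr (Pt (e k) l)) == [set lift ord0 k]]].
have decK : forall b, dec (stat (Sys e b)) = b.
  move=> b; apply/ffunP => k; rewrite ffunE.
  case: pickP => [l | none]; first by rewrite hk => /eqP.
  by have := none (b k); rewrite hk eqxx.
have inj : injective (fun b => enc B (stat (Sys e b))).
  move=> b1 b2 /enc_inj h.
  by rewrite -(decK b1) -(decK b2) h ?hB.
have := leq_card _ inj.
by rewrite card_ffun card_ord card_prod card_ord card_tuple card_bool.
Qed.
Close Scope ring_scope.
Unset Implicit Arguments.

Lemma count_contra p m' : 64 <= p -> 3 <= m' ->
  (2 * m'.+1).+1 * 2 ^ (2 * m'.+1) < p ^ m'.
Proof.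
move=> hp hm.
have h1 := @ltn_expl 2 (2 * m'.+1).+1 isT.
apply: (@leq_trans (2 ^ (2 * m'.+1).+1 * 2 ^ (2 * m'.+1))).
  by rewrite ltn_pmul2r ?expn_gt0.
apply: (@leq_trans (64 ^ m')); last by rewrite leq_exp2r // (leq_trans _ hm).
have -> : 64 = 2 ^ 6 by [].
rewrite -expnD -expnM leq_exp2l //.
move/leP: hm => hm; apply/leP; rewrite -!multE -!plusE; lia.
Qed.

Lemma exists_e (F : finType) K0 m' : m' <= #|F| ^ K0.+1 ->
  exists e : 'I_m' -> {ffun 'I_K0.+1 -> F}, injective e.
Proof.
move=> h.
have h' : m' <= #|{: {ffun 'I_K0.+1 -> F}}| by rewrite card_ffun card_ord.
exists (fun k => enum_val (widen_ord h' k)).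
by move=> x y /enum_val_inj /(congr1 val) /= /val_inj.
Qed.

Open Scope R_scope.

Lemma INR_expn (p k : nat) : INR (expn p k) = INR p ^ k.
Proof.
elim: k => [|k IH]; first by rewrite expn0.
by rewrite expnS -multE mult_INR IH /=.
Qed.

Lemma up_nat x : 0 < x -> x < INR (Z.to_nat (up x)).
Proof.
intros hx. destruct (archimed x) as [h1 h2].
rewrite INR_IZR_INZ Z2Nat.id; first lra.
apply le_IZR; simpl; lra.
Qed.

Lemma floor_nat X : 1 <= X ->
  INR (Nat.pred (Z.to_nat (up X))) <= X /\ X < INR (Nat.pred (Z.to_nat (up X))) + 1.
Proof.
intros hX. destruct (archimed X) as [h1 h2].
have hz : (1 <= Z.to_nat (up X))%coq_nat.
  have : Z.lt 0 (up X) by apply lt_IZR; simpl; lra.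
  lia.
have e : INR (Z.to_nat (up X)) = INR (Nat.pred (Z.to_nat (up X))) + 1.
  rewrite -S_INR; f_equal; lia.
rewrite INR_IZR_INZ Z2Nat.id in e; last by apply le_IZR; simpl; lra.
lra.
Qed.

Lemma ratio_lt1 n m (stat : setsys n.+1 m.+1 -> seq bool) dyn r :
  0 <= r -> r < 1 -> valid_dynamic 1 dyn -> ~ achieves_ratio 1 stat dyn r.
Proof.
move=> r0 r1 vd h.
pose I : setsys n.+1 m.+1 := fun _ => setT.
pose Q := [set: 'I_n.+1].
have ho : (1 <= OPT 1 I Q)%nat.
  apply: leq_trans (opt_ge I Q (J := [set ord0]) _); last by rewrite cards1.
  by rewrite cov1 setIid cardsT card_ord.
have hc := opt_ge I Q (vd (stat I) Q).
move/leP: ho => /le_INR ho; move/leP: hc => /le_INR hc.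
have := h I Q; rewrite /= in ho.
set a := INR (OPT 1 I Q) in ho hc *; set c := INR _ in hc *.
nra.
Qed.

Lemma ratio_nat n m (stat : setsys n m -> seq bool) dyn r (p K : nat) :
  0 <= r -> r * INR K < INR p -> achieves_ratio 1 stat dyn r ->
  (forall I Q, (0 < OPT 1 I Q)%nat -> (0 < coverage I (dyn (stat I) Q) Q)%nat) /\
  (forall I Q, (p <= OPT 1 I Q)%nat -> (K < coverage I (dyn (stat I) Q) Q)%nat).
Proof.
move=> r0 rK h; split => I Q.
- rewrite !lt0n; apply: contra => /eqP e.
  have := h I Q; rewrite e /= Rmult_0_r => h0.
  apply/eqP; apply: INR_eq; simpl; have := pos_INR (OPT 1 I Q); lra.
- move=> ho; rewrite ltnNge; apply/negP => hc.
  move/leP: ho => /le_INR ho; move/leP: hc => /le_INR hc.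
  have := h I Q.
  set a := INR (OPT 1 I Q) in ho *; set c := INR _ in hc *.
  nra.
Qed.

Lemma eps_core (p K0 m' : nat) (pp : prime p) r
  (stat : setsys (@NN 'F_p) m'.+1 -> seq bool) dyn :
  (64 <= p)%nat -> (3 <= m')%nat -> (m' <= p ^ K0.+1)%nat -> 0 <= r -> r * INR K0.+1 < INR p ->
  valid_dynamic 1 dyn -> (forall I, (size (stat I) <= 2 * m'.+1)%nat) ->
  ~ achieves_ratio 1 stat dyn r.
Proof.
move=> hp hm hmK r0 rK vd hB h.
have cF : #|'F_p| = p := card_Fp pp.
have hmK' : (m' <= #|'F_p| ^ K0.+1)%nat by rewrite cF.
have [e einj] := @exists_e 'F_p K0 m' hmK'.
have [h1 h2] := @ratio_nat _ _ stat dyn r p K0.+1 r0 rK h.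
have h2' : forall I Q, (#|'F_p| <= OPT 1 I Q)%nat -> (K0.+1 < coverage I (dyn (stat I) Q) Q)%nat.
  by move=> I Q; rewrite cF; apply: h2.
have := combi einj vd hB h1 h2'.
rewrite cF => hc.
by have := @count_contra p m' hp hm; rewrite ltnNge hc.
Qed.

Lemma Rpower_pos x y : 0 < Rpower x y.
Proof. rewrite /Rpower; apply exp_pos. Qed.

Lemma eps_pos eps delta C N0 : 0 < eps -> eps <= 1 / 2 -> 0 < delta -> 0 < C ->
  exists n m : nat,
      (N0 <= n)%nat /\ (N0 <= m)%nat /\
      (Rpower (INR m) eps <= sqrt (INR n)) /\
      forall (stat : setsys n m -> seq bool)
             (dyn : seq bool -> {set 'I_n} -> {set 'I_m}),
        valid_dynamic 1 dyn ->
        uses_at_most_bits stat (INR n * Rpower (INR m) (1 - 2 * eps)) ->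
        ~ achieves_ratio 1 stat dyn (C * Rpower (INR m) (eps - delta)).
Proof.
move=> e0 e1 d0 c0.
have ieps : 2 <= / eps.
  have := Rinv_r eps (Rgt_not_eq _ _ e0). have := Rinv_0_lt_compat _ e0. nra.
set K0 := Z.to_nat (up (/ eps)).
have hK0 : / eps < INR K0 by apply: up_nat; lra.
have hKS : INR K0.+1 = INR K0 + 1 by rewrite S_INR.
set Y := Rpower (C * INR K0.+1) (/ delta).
have Ypos : 0 < Y by apply: Rpower_pos.
set M0 := Z.to_nat (up Y).
have hM0 : Y < INR M0 := up_nat _ Ypos.
case: (prime_above (maxn 63 (maxn N0 M0))) => p hp pp.
move: hp; rewrite !gtn_max => /and3P [hp63 hpN hpM].
have pR : 64 <= INR p by move/leP: hp63 => /le_INR; rewrite /=; lra.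
have pY : Y < INR p by move/leP: hpM => /lt_INR; lra.
set X := Rpower (INR p) (/ eps).
have hXp : Rpower X eps = INR p.
  by rewrite /X Rpower_mult Rinv_l ?Rpower_1; lra.
have hpX : INR p <= X.
  have : Rpower (INR p) 1 <= X by apply: Rle_Rpower; lra.
  by rewrite Rpower_1; lra.
have [hm1 hm2] := floor_nat X ltac:(lra).
set mm := Nat.pred (Z.to_nat (up X)) in hm1 hm2.
have pmm : (p <= mm)%coq_nat.
  have : INR p < INR (S mm) by rewrite S_INR; lra.
  move/INR_lt; lia.
have [m' em] : exists m', mm = m'.+1.
  exists (Nat.pred mm); move/leP: hp63; lia.
rewrite em in hm1 hm2 pmm.
have mR1 : 1 <= INR m'.+1 by rewrite S_INR; have := pos_INR m'; lra.
have hn : INR (NN 'F_p) = INR p * INR p.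
  by rewrite /NN card_prod card_Fp // -multE mult_INR.
exists (NN 'F_p), m'.+1.
have hA : Rpower (INR m'.+1) eps <= INR p.
  by rewrite -hXp; apply: Rle_Rpower_l; lra.
split.
  rewrite /NN card_prod card_Fp //; apply: leq_trans (ltnW hpN) _.
  by rewrite leq_pmulr // prime_gt0.
split.
  by apply: leq_trans (ltnW hpN) _; apply/leP.
split.
  by rewrite hn sqrt_square; lra.
move=> stat dyn vd hb.
have hb2 : INR (NN 'F_p) * Rpower (INR m'.+1) (1 - 2 * eps) <= 2 * INR m'.+1.
  have l1 : INR p < Rpower (INR m'.+1 + 1) eps.
    by rewrite -hXp; apply: Rlt_Rpower_l; lra.
  have l2 : Rpower (INR m'.+1 + 1) eps <= Rpower (2 * INR m'.+1) eps.
    by apply: Rle_Rpower_l; lra.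
  set Z := Rpower (2 * INR m'.+1) eps in l2.
  have l3 : INR p * INR p < Z * Z by nra.
  have l4 : Z * Z = Rpower 2 (2 * eps) * Rpower (INR m'.+1) (2 * eps).
    rewrite /Z -Rpower_plus Rpower_mult_distr; try lra.
    by f_equal; ring.
  have l5 : Rpower 2 (2 * eps) <= 2.
    have : Rpower 2 (2 * eps) <= Rpower 2 1 by apply: Rle_Rpower; lra.
    by rewrite Rpower_1; lra.
  have l6 : Rpower (INR m'.+1) (2 * eps) * Rpower (INR m'.+1) (1 - 2 * eps) = INR m'.+1.
    rewrite -Rpower_plus.
    by replace (2 * eps + (1 - 2 * eps)) with 1 by ring; rewrite Rpower_1; lra.
  have W0 := Rpower_pos (INR m'.+1) (1 - 2 * eps).
  have V0 := Rpower_pos (INR m'.+1) (2 * eps).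
  set W := Rpower (INR m'.+1) (1 - 2 * eps) in W0 l6 *.
  set V := Rpower (INR m'.+1) (2 * eps) in V0 l4 l6 *.
  rewrite hn; nra.
set D := Rpower (INR m'.+1) delta.
have hD : C * INR K0.+1 < D.
  have h1 : Rpower Y delta = C * INR K0.+1.
    rewrite /Y Rpower_mult Rinv_l ?Rpower_1; try lra.
    apply: Rmult_lt_0_compat => //; rewrite hKS; have := pos_INR K0; lra.
  have h2 : Rpower Y delta < Rpower (INR p) delta by apply: Rlt_Rpower_l; lra.
  have h3 : Rpower (INR p) delta <= D.
    apply: Rle_Rpower_l; try lra; split; try lra.
    have : INR p <= INR m'.+1 by apply: le_INR.
    lra.
  lra.
have hr : Rpower (INR m'.+1) (eps - delta) = Rpower (INR m'.+1) eps * / D.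
  by rewrite /Rminus Rpower_plus Rpower_Ropp.
apply: (@eps_core p K0 m' pp _ stat dyn hp63).
- move/leP: hp63 => hp63'; apply/leP; lia.
- apply/leP; have : INR m'.+1 <= INR (expn p K0.+1).
    rewrite INR_expn -Rpower_pow; last lra.
    apply: Rle_trans hm1 _; apply: Rle_Rpower; lra.
  move/INR_le; lia.
- apply: Rmult_le_pos; first lra.
  by apply: Rlt_le; apply: Rpower_pos.
- rewrite hr.
  have A0 := Rpower_pos (INR m'.+1) eps.
  set A := Rpower (INR m'.+1) eps in A0 hA *.
  have D0 : 0 < D by apply: Rpower_pos.
  have Dy : D * / D = 1 by apply: Rinv_r; lra.
  have y0 : 0 < / D by apply: Rinv_0_lt_compat.
  set y := / D in Dy y0 *.
  have K0p : 0 < INR K0.+1 by rewrite hKS; have := pos_INR K0; lra.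
  set K := INR K0.+1 in hD K0p *.
  have e1' : C * (A * y) * K <= C * K * INR p * y.
    have : C * K * y * A <= C * K * y * INR p.
      apply: Rmult_le_compat_l => //; apply: Rmult_le_pos; try lra.
      apply: Rmult_le_pos; lra.
    lra.
  have e2 : C * K * y < D * y by apply: Rmult_lt_compat_r.
  nra.
- exact: vd.
- move=> I; have := hb I => hI.
  apply/leP; apply: INR_le.
  rewrite -multE mult_INR /=.
  rewrite -/(INR m'.+1); lra.
Qed.

Lemma eps_zero delta C N0 : 0 < delta -> 0 < C ->
  exists n m : nat,
      (N0 <= n)%nat /\ (N0 <= m)%nat /\
      (Rpower (INR m) 0 <= sqrt (INR n)) /\
      forall (stat : setsys n m -> seq bool)
             (dyn : seq bool -> {set 'I_n} -> {set 'I_m}),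
        valid_dynamic 1 dyn ->
        uses_at_most_bits stat (INR n * Rpower (INR m) (1 - 2 * 0)) ->
        ~ achieves_ratio 1 stat dyn (C * Rpower (INR m) (0 - delta)).
Proof.
move=> d0 c0.
set Y := Rpower C (/ delta).
have Ypos : 0 < Y by apply: Rpower_pos.
set M1 := Z.to_nat (up Y).
have hM1 : Y < INR M1 := up_nat _ Ypos.
exists N0.+1, (maxn N0 M1).+1.
have mpos : 0 < INR (maxn N0 M1).+1 by rewrite S_INR; have := pos_INR (maxn N0 M1); lra.
split; first by [].
split; first by apply/leqW/leq_maxl.
split.
  rewrite Rpower_O //; rewrite -sqrt_1; apply: sqrt_le_1_alt.
  by rewrite S_INR; have := pos_INR N0; lra.
move=> stat dyn vd _.
apply: (@ratio_lt1 N0 (maxn N0 M1) stat dyn _ _ _ vd).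
- by apply: Rmult_le_pos; [lra | apply: Rlt_le; apply: Rpower_pos].
- have hC : Rpower Y delta = C by rewrite /Y Rpower_mult Rinv_l ?Rpower_1; lra.
  have h2 : Rpower Y delta < Rpower (INR (maxn N0 M1).+1) delta.
    apply: Rlt_Rpower_l; first lra; split; first lra.
    apply: Rlt_le_trans hM1 _; apply: le_INR; apply/leP.
    by rewrite (leq_trans (leq_maxr N0 M1)).
  have D0 := Rpower_pos (INR (maxn N0 M1).+1) delta.
  rewrite /Rminus Rplus_0_l Rpower_Ropp.
  set D := Rpower (INR (maxn N0 M1).+1) delta in h2 D0 *.
  have Dy : D * / D = 1 by apply: Rinv_r; lra.
  have y0 : 0 < / D by apply: Rinv_0_lt_compat.
  set y := / D in Dy y0 *.
  rewrite hC in h2.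
  have : C * y < D * y by apply: Rmult_lt_compat_r.
  lra.
Qed.

Close Scope R_scope.
From mathcomp Require Import all_boot.
From Stdlib Require Import Reals.
Delimit Scope nat_scope with N.
Delimit Scope R_scope with R.

Theorem mainTheorem7 :
  forall (eps delta C : R) (N0 : nat),
    (0 <= eps <= 1 / 2)%R -> (0 < delta)%R -> (0 < C)%R ->
    exists n m : nat,
      (N0 <= n)%N /\ (N0 <= m)%N /\
      (Rpower (INR m) eps <= sqrt (INR n))%R /\
      forall (stat : setsys n m -> seq bool)
             (dyn : seq bool -> {set 'I_n} -> {set 'I_m}),
        valid_dynamic 1 dyn ->
        uses_at_most_bits stat (INR n * Rpower (INR m) (1 - 2 * eps))%R ->
        ~ achieves_ratio 1 stat dyn (C * Rpower (INR m) (eps - delta))%R.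
Proof.
move=> eps delta C N0 [e0 e1] d0 c0.
case: (Rle_lt_or_eq_dec _ _ e0) => [ep | <-].
  exact (eps_pos eps delta C N0 ep e1 d0 c0).
exact (eps_zero delta C N0 d0 c0).
Qed.
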